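(* Let $X$ be a locally compact space and $K\subset X$ quasi-compact. Then $L=\{S\in\mathcal{H}X: S\cap K\neq\emptyset\}$ is compact. The space $\mathcal{H}X$ is locally compact, and it is $\sigma$-compact if $X$ is $\sigma$-compact.
   Context: Quasi-compact: every open cover has a finite subcover; compact: quasi-compact Hausdorff; locally compact: every point has a compact neighbourhood (not necessarily Hausdorff); $\sigma$-compact: countable union of compact sets. $\mathcal{H}X$ is the set of nonempty $S\subset X$ such that for every finite family $(V_i)$ of open sets with $S\cap V_i\neq\emptyset$ for all $i$, $\bigcap_iV_i\neq\emptyset$. It is topologized as a subspace of $\hat{\mathcal{H}}X=\mathcal{H}X\cup\{\emptyset\}$, whose topology is generated by the sets $\{S: S\cap V\neq\emptyset\}$ ($V$ open in $X$) and $\{S: S\cap Q=\emptyset\}$ ($Q$ quasi-compact in $X$). *)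

(* Defs.v *)
From HB Require Import structures.
From mathcomp Require Import all_boot all_order.
From mathcomp Require Import all_classical all_reals all_analysis.
Set Implicit Arguments. Unset Strict Implicit. Unset Printing Implicit Defensive.
Local Open Scope classical_set_scope.

Definition hausdorff_set {T : topologicalType} (A : set T) : Prop :=
  forall x y, A x -> A y -> x <> y ->
    exists U V : set T, [/\ open U, open V, U x, V y & U `&` V `&` A = set0].

(** compact = quasi-compact ([compact] of mathcomp-analysis) + Hausdorff *)
Definition compact_set {T : topologicalType} (A : set T) : Prop :=
  compact A /\ hausdorff_set A.

Definition locally_compact_on {T : topologicalType} (A : set T) : Prop :=
  forall x, A x -> exists N : set T,
    [/\ N `<=` A, (exists U, [/\ open U, U x & U `&` A `<=` N]) & compact_set N].

Definition sigma_compact_on {T : topologicalType} (A : set T) : Prop :=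
  exists K : nat -> set T, (forall n, compact_set (K n)) /\ \bigcup_n K n = A.

Definition locally_compact_space (T : topologicalType) := locally_compact_on (@setT T).
Definition sigma_compact_space (T : topologicalType) := sigma_compact_on (@setT T).

Definition hyper (X : topologicalType) : Type := set X.
HB.instance Definition _ (X : topologicalType) := Choice.on (hyper X).

Definition hyper_subbase (X : topologicalType) : set (set X * bool) :=
  [set p | if p.2 then open p.1 else compact p.1].
Definition hyper_gen (X : topologicalType) (p : set X * bool) : set (hyper X) :=
  if p.2 then [set S : hyper X | S `&` p.1 !=set0]
  else [set S : hyper X | S `&` p.1 = set0].

HB.instance Definition _ (X : topologicalType) :=
  isSubBaseTopological.Build (hyper X) (@hyper_subbase X) (@hyper_gen X).

Definition HX (X : topologicalType) : set (hyper X) :=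
  [set S : hyper X | S !=set0 /\
    forall (n : nat) (V : 'I_n -> set X), (forall i, open (V i)) ->
      (forall i, S `&` V i !=set0) -> \bigcap_i V i !=set0].

(* Main.v *)
Require Import Defs.
From HB Require Import structures.
From mathcomp Require Import all_boot all_order finmap.
From mathcomp Require Import all_classical all_reals all_analysis.
Local Open Scope classical_set_scope.

Lemma hyper_nbhsE (X : topologicalType) (S : hyper X) (A : set (hyper X)) :
  nbhs S A -> exists D' : {fset (set X * bool)}, {subset D' <= @hyper_subbase X} /\
     (\bigcap_(i in [set` D']) hyper_gen i) S /\ \bigcap_(i in [set` D']) hyper_gen i `<=` A.
Proof.
case=> B [[D0 sD0 eB] BS BA].
move: BS; rewrite -eB => -[C D0C CS]; have [D' sD' eC] := sD0 _ D0C.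
exists D'; split => //; split; first by rewrite eC.
move=> R HR; apply: BA; rewrite -eB; exists C => //; move: HR; rewrite eC; exact: id.
Qed.

Lemma hyper_open_gen (X : topologicalType) p : hyper_subbase p -> open (@hyper_gen X p).
Proof.
move=> Hp. rewrite /open /=.
exists [set @hyper_gen X p]; first by move=> _ ->; exact: finI_from1.
by rewrite bigcup_set1.
Qed.

Lemma hyper_cvg (X : topologicalType) (F : set_system (hyper X)) (S : hyper X) :
  Filter F -> (forall p, hyper_subbase p -> hyper_gen p S -> F (hyper_gen p)) -> F --> S.
Proof.
move=> FF H A /hyper_nbhsE [D' [sD' [DS DA]]].
change (F A); apply: (@filterS _ F FF _ _ DA); apply: filter_bigI => i iD.
apply: H; first by have := sD' _ iD; rewrite inE.
exact: DS.
Qed.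

Section Lcompact.
Variables (X : topologicalType) (F : set_system (hyper X)).
Hypothesis UF : UltraFilter F.

Let S : hyper X := [set x | forall W, open W -> W x -> F [set R : hyper X | R `&` W !=set0]].

Let S_meet (Q : set X) : compact Q -> F [set R : hyper X | R `&` Q !=set0] -> S `&` Q !=set0.
Proof.
move=> cQ FQ; apply/set0P/negP => /eqP SQ0.
have PF : ProperFilter F by apply: ultra_proper.
have : \forall R \near F, Q `<=` (fun q => ~ R q).
  apply: (iffLR (compact_near_coveringP Q) cQ) => q Qq.
  have nSq : ~ S q by move=> Sq; have : (S `&` Q) q by []; rewrite SQ0.
  have [W [oW Wq nFW]] : exists W, [/\ open W, W q & ~ F [set R : hyper X | R `&` W !=set0]].
    apply: contra_notP nSq => H W oW Wq; apply: contra_notP H => nF; by exists W.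
  have FW : F [set R : hyper X | R `&` W = set0].
    case: (in_ultra_setVsetC [set R : hyper X | R `&` W !=set0] UF) => // FC.
    apply: filterS FC => R /= nR; apply: contra_notP nR => H; by apply/set0P; apply/eqP.
  exists (W, [set R : hyper X | R `&` W = set0]); first by split => //=; apply: open_nbhs_nbhs.
  case=> y R /= [Wy RW0] Ry; have : (R `&` W) y by []. by rewrite RW0.
move=> FB; apply: (@filter_not_empty _ F PF).
apply: (@filterS _ F PF _ _ _ (@filterI _ F PF _ _ FB FQ)).
by move=> R [/= H [q [Rq Qq]]]; exact: H q Qq Rq.
Qed.
Lemma L_limit (K : set X) : compact K -> F [set R : hyper X | HX R /\ R `&` K !=set0] ->
  [set R : hyper X | HX R /\ R `&` K !=set0] `&` [set p | F --> p] !=set0.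
Proof.
move=> cK FL.
have PF : ProperFilter F by apply: ultra_proper.
have SK : S `&` K !=set0.
  by apply: S_meet => //; apply: filterS FL => R [].
exists S; split; first split => //; first split.
- by case: SK => x [Sx _]; exists x.
- move=> n V oV SV.
  have FV : forall i, \forall R \near F, R `&` V i !=set0.
    by move=> i; case: (SV i) => x [Sx Vx]; exact: Sx (V i) (oV i) Vx.
  have := @filter_forall _ _ _ F PF FV.
  move=> FA; have [R [[HR _] RV]] := @filter_ex _ F PF _ (@filterI _ F PF _ _ FL FA).
  exact: HR.2 n V oV RV.
- apply: hyper_cvg => -[V []] /= Hp HS.
  + by case: HS => x [Sx Vx]; exact: Sx V Hp Vx.
  + case: (in_ultra_setVsetC [set R : hyper X | R `&` V = set0] UF) => // FC.
    have : S `&` V !=set0.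
      apply: S_meet => //; apply: filterS FC => R /= nR.
      by apply/set0P; apply/eqP.
    by rewrite HS => -[].
Qed.
End Lcompact.

Lemma L_compact (X : topologicalType) (K : set X) : compact K ->
  compact [set R : hyper X | HX R /\ R `&` K !=set0].
Proof. move=> cK; rewrite compact_ultra => F UF FL; exact: L_limit. Qed.

Lemma sep_compact (X : topologicalType) (N C : set X) (x : X) :
  hausdorff_set N -> compact C -> C `<=` N -> N x -> ~ C x ->
  exists A B : set X, [/\ open A, open B, A x, C `<=` B & A `&` B `&` N = set0].
Proof.
move=> hN cC CN Nx nCx.
pose P' := fun (A : set X) (c : X) => exists Oo, [/\ open Oo, Oo c & A `&` Oo `&` N = set0].
have : \forall A \near powerset_filter_from (nbhs x), C `<=` P' A.
  apply: (iffLR (compact_near_coveringP C) cC) => c Cc.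
  have xc : x <> c by move=> e; apply: nCx; rewrite e.
  have [Ac [Bc [oA oB Ax Bc' AB0]]] := hN x c Nx (CN c Cc) xc.
  exists (Bc, [set A' | A' `<=` Ac]).
    split => /=; first by apply: open_nbhs_nbhs.
    by apply: small_set_sub; apply: open_nbhs_nbhs.
  case=> c' A' /= [Bc'' sA']; exists Bc; split => //.
  by apply/seteqP; split => // y [[/sA' Ay By] Ny]; rewrite -AB0.
case/near_powerset_filter_fromP.
  move=> A1 A2 sA HCP c /HCP [Oo [oO Oc AO]]; exists Oo; split => //.
  by apply/seteqP; split => // y [[/sA Ay Oy] Ny]; rewrite -AO.
move=> A0 nA0 CA0.
pose B := \bigcup_(Oo in [set Oo | open Oo /\ A0 `&` Oo `&` N = set0]) Oo.
exists (interior A0), B; split.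
- exact: open_interior.
- by apply: bigcup_open => Oo [].
- exact: nbhs_singleton (nbhs_interior nA0).
- by move=> c /CA0 [Oo [oO Oc AO]]; exists Oo.
- apply/seteqP; split=> // y [[/interior_subset A0y [Oo [oO AO] Oy]] Ny].
  by rewrite -AO.
Qed.

Lemma HX_sep (X : topologicalType) : locally_compact_space X ->
  forall (T : hyper X) (x : X), HX T -> ~ T x ->
  exists W Q : set X, [/\ open W, W x, compact Q, W `<=` Q & T `&` Q = set0].
Proof.
move=> lc T x HT nTx.
have [N [_ [U [oU Ux UN]] [cN hN]]] := lc x Logic.I.
have UN' : U `<=` N by move=> y Uy; apply: UN.
have [U' [oU' U'x U'U U'T]] : exists U', [/\ open U', U' x, U' `<=` U & T `&` U' = set0].
  case: (pselect (T `&` U !=set0)) => [[t0 [Tt0 Ut0]] | nTU]; last first.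
    exists U; split => //; apply/seteqP; split => // y [Ty Uy]; apply: nTU; by exists y.
  have xt : x <> t0 by move=> e; apply: nTx; rewrite e.
  have [A0 [B0 [oA oB A0x B0t AB0]]] := hN x t0 (UN' x Ux) (UN' t0 Ut0) xt.
  exists (U `&` A0); split; [exact: openI | by [] | by move=> y [] |].
  apply/seteqP; split => // t [Tt [Ut At]].
  pose V : 'I_2 -> set X := fun i => if val i == 0%N then U `&` A0 else U `&` B0.
  have [y Hy] := HT.2 2 V (fun i => ltac:(rewrite /V; case: ifP => _; exact: openI))
    (fun i => ltac:(rewrite /V; case: ifP => _; [exists t | exists t0]; done)).
  have h0 := Hy ord0 Logic.I; have h1 := Hy ord_max Logic.I.
  rewrite /V /= in h0 h1.
  have : (A0 `&` B0 `&` N) y by case: h0 => Uy A0y; case: h1 => _ B0y; split => //; exact: UN'.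
  by rewrite AB0.
have cC : compact (N `&` ~` U') by apply: compact_closedI cN (open_closedC oU').
have nCx : ~ (N `&` ~` U') x by case.
have [A [B [oA oB Ax CB AB0]]] := @sep_compact X N _ x hN cC (@subIsetl _ _ _) (UN' x Ux) nCx.
exists (A `&` U'), (N `&` ~` B); split.
- exact: openI.
- by split.
- exact: compact_closedI cN (open_closedC oB).
- move=> w [Aw U'w]; split; first by apply: UN'; apply: U'U.
  move=> Bw; have : (A `&` B `&` N) w by split => //; apply: UN'; exact: U'U.
  by rewrite AB0.
- apply/seteqP; split => // q [Tq [Nq nBq]].
  case: (pselect (U' q)) => [U'q|nU'q].
    by have : (T `&` U') q by []; rewrite U'T.
  by apply: nBq; apply: CB.
Qed.

Lemma HX_hausdorff (X : topologicalType) (A : set (hyper X)) :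
  locally_compact_space X -> A `<=` @HX X -> hausdorff_set A.
Proof.
move=> lc AH S T AS AT ST.
have sep : forall S T : hyper X, HX T -> forall x, S x -> ~ T x ->
    exists U V : set (hyper X), [/\ open U, open V, U S, V T & U `&` V = set0].
  move=> S1 T1 HT1 x Sx nTx.
  have [W [Q [oW Wx cQ WQ TQ]]] := @HX_sep X lc T1 x HT1 nTx.
  exists (hyper_gen (W, true)), (hyper_gen (Q, false)); split.
  - by apply: hyper_open_gen.
  - by apply: hyper_open_gen.
  - by exists x.
  - exact: TQ.
  - apply/seteqP; split => // R [/= [y [Ry Wy]] RQ].
    have : (R `&` Q) y by split => //; apply: WQ.
    by rewrite /= in RQ; rewrite RQ.
have [[x [Sx nTx]] | [x [Tx nSx]]] : (exists x, S x /\ ~ T x) \/ (exists x, T x /\ ~ S x).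
  apply: contra_notP ST => H; apply/funext => y; apply/propext; split => Hy;
    apply: contra_notP H => nH; [left|right]; by exists y.
- have [U [V [oU oV US VT UV]]] := sep S T (AH T AT) x Sx nTx.
  by exists U, V; split => //; rewrite UV set0I.
- have [U [V [oU oV UT VS UV]]] := sep T S (AH S AS) x Tx nSx.
  by exists V, U; split => //; rewrite (setIC V U) UV set0I.
Qed.

Theorem proposition3p7 (X : topologicalType) (K : set X) :
  locally_compact_space X -> compact K ->
  [/\ compact_set [set S : hyper X | HX S /\ S `&` K !=set0],
      locally_compact_on (@HX X)
    & sigma_compact_space X -> sigma_compact_on (@HX X)].
Proof.
move=> lc cK; split.
- split; first exact: L_compact.
  by apply: HX_hausdorff => // R [].
- move=> S HS; case: (HS.1) => x Sx.
  have [N [_ [U [oU Ux UN]] [cN hN]]] := lc x Logic.I.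
  exists [set R : hyper X | HX R /\ R `&` N !=set0]; split.
  + by move=> R [].
  + exists (hyper_gen (U, true)); split.
    * by apply: hyper_open_gen.
    * by exists x.
    * move=> R [/= [y [Ry Uy]] HR]; split => //; exists y; split => //; exact: UN.
  + split; first exact: L_compact.
    by apply: HX_hausdorff => // R [].
- move=> [Kn [cKn UK]].
  exists (fun n => [set R : hyper X | HX R /\ R `&` Kn n !=set0]); split.
  + move=> n; split; first exact: L_compact (cKn n).1.
    by apply: HX_hausdorff => // R [].
  + apply/seteqP; split; first by move=> R [n _ [HR _]].
    move=> R HR; case: (HR.1) => x Rx.
    have : (\bigcup_n Kn n) x by rewrite UK.
    case=> n _ Knx; exists n => //; split => //; by exists x.
Qed.
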